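(* Let $\Gamma$ be a finite multiset of formulas and $A$ a formula. If $\Gamma \vdash_c A$ and $(\mathcal{V}^-(\Gamma) \cup \mathcal{V}^+(A)) \cap (\mathcal{V}^+_{ns}(\Gamma) \cup \mathcal{V}^-(A)) = \emptyset$, then $\Gamma \vdash_i A$.
   Context: Formulas are built from propositional variables and $\bot$ using $\land$, $\lor$, $\to$; $\lnot A$ abbreviates $A \to \bot$. $\vdash_c$ and $\vdash_i$ denote derivability in classical and intuitionistic propositional logic respectively. The sets $\mathcal{V}^+(A)$, $\mathcal{V}^-(A)$ of variables occurring positively, negatively in $A$ are defined simultaneously by: $\mathcal{V}^+(p)=\{p\}$, $\mathcal{V}^+(\bot)=\emptyset$, $\mathcal{V}^+(A\land B)=\mathcal{V}^+(A\lor B)=\mathcal{V}^+(A)\cup\mathcal{V}^+(B)$, $\mathcal{V}^+(A\to B)=\mathcal{V}^-(A)\cup\mathcal{V}^+(B)$; $\mathcal{V}^-(p)=\mathcal{V}^-(\bot)=\emptyset$, $\mathcal{V}^-(A\land B)=\mathcal{V}^-(A\lor B)=\mathcal{V}^-(A)\cup\mathcal{V}^-(B)$, $\mathcal{V}^-(A\to B)=\mathcal{V}^+(A)\cup\mathcal{V}^-(B)$. The set $\mathcal{V}^+_{ns}(A)$ of variables occurring non-strictly positively is defined by $\mathcal{V}^+_{ns}(p)=\mathcal{V}^+_{ns}(\bot)=\emptyset$, $\mathcal{V}^+_{ns}(A\land B)=\mathcal{V}^+_{ns}(A\lor B)=\mathcal{V}^+_{ns}(A)\cup\mathcal{V}^+_{ns}(B)$,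 $\mathcal{V}^+_{ns}(A\to B)=\mathcal{V}^-(A)\cup\mathcal{V}^+_{ns}(B)$. For a finite multiset $\Gamma$, $\mathcal{V}^+(\Gamma)=\bigcup_{A\in\Gamma}\mathcal{V}^+(A)$, and similarly for $\mathcal{V}^-$ and $\mathcal{V}^+_{ns}$. *)

(* Defs.v *)
From Stdlib Require Import List.
Import ListNotations.

Inductive form : Type :=
| Var : nat -> form
| Bot : form
| And : form -> form -> form
| Or  : form -> form -> form
| Imp : form -> form -> form.

Definition Neg (A : form) : form := Imp A Bot.

Fixpoint Vpos (A : form) : list nat :=
  match A with
  | Var p => [p]
  | Bot => []
  | And B C => Vpos B ++ Vpos C
  | Or B C => Vpos B ++ Vpos C
  | Imp B C => Vneg B ++ Vpos C
  end
with Vneg (A : form) : list nat :=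
  match A with
  | Var _ => []
  | Bot => []
  | And B C => Vneg B ++ Vneg C
  | Or B C => Vneg B ++ Vneg C
  | Imp B C => Vpos B ++ Vneg C
  end.

Fixpoint Vns (A : form) : list nat :=
  match A with
  | Var _ => []
  | Bot => []
  | And B C => Vns B ++ Vns C
  | Or B C => Vns B ++ Vns C
  | Imp B C => Vneg B ++ Vns C
  end.

(* Finite multisets of formulas are represented by lists. *)
Definition VposL (G : list form) : list nat := flat_map Vpos G.
Definition VnegL (G : list form) : list nat := flat_map Vneg G.
Definition VnsL  (G : list form) : list nat := flat_map Vns G.

(* Natural deduction; the boolean flag [cl] selects classical logic
   (rule RAA) instead of intuitionistic ex falso. *)
Inductive ND (cl : bool) : list form -> form -> Prop :=
| nd_ax : forall G A, In A G -> ND cl G A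
| nd_andI : forall G A B, ND cl G A -> ND cl G B -> ND cl G (And A B)
| nd_andE1 : forall G A B, ND cl G (And A B) -> ND cl G A
| nd_andE2 : forall G A B, ND cl G (And A B) -> ND cl G B
| nd_orI1 : forall G A B, ND cl G A -> ND cl G (Or A B)
| nd_orI2 : forall G A B, ND cl G B -> ND cl G (Or A B)
| nd_orE : forall G A B C, ND cl G (Or A B) -> ND cl (A :: G) C ->
    ND cl (B :: G) C -> ND cl G C
| nd_impI : forall G A B, ND cl (A :: G) B -> ND cl G (Imp A B)
| nd_impE : forall G A B, ND cl G (Imp A B) -> ND cl G A -> ND cl G B
| nd_efq : forall G A, ND cl G Bot -> ND cl G A
| nd_raa : forall G A, cl = true -> ND cl (Neg A :: G) Bot -> ND cl G A.

Definition prov_c (G : list form) (A : form) : Prop := ND true G A.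
Definition prov_i (G : list form) (A : form) : Prop := ND false G A.

(* Main.v *)
Require Import Defs.
From Stdlib Require Import List.
From Stdlib Require Import Arith Lia Classical Cantor.
Import ListNotations.

Lemma ND_weaken cl G A : ND cl G A -> forall G', incl G G' -> ND cl G' A.
Proof.
  induction 1; intros G' Hi.
  - apply nd_ax; auto.
  - apply nd_andI; auto.
  - eapply nd_andE1; eauto.
  - eapply nd_andE2; eauto.
  - apply nd_orI1; auto.
  - apply nd_orI2; auto.
  - eapply nd_orE; [eauto | apply IHND2 | apply IHND3];
      apply incl_cons; try (left; reflexivity); apply incl_tl; auto.
  - apply nd_impI. apply IHND.
      apply incl_cons; try (left; reflexivity); apply incl_tl; auto.
  - eapply nd_impE; eauto.
  - apply nd_efq; auto.
  - apply nd_raa; auto. apply IHND.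
      apply incl_cons; try (left; reflexivity); apply incl_tl; auto.
Qed.

Definition theory := form -> Prop.
Definition Thm (T : theory) (F : form) : Prop :=
  exists L, (forall x, In x L -> T x) /\ ND false L F.
Definition ext (T : theory) (F : form) : theory := fun x => T x \/ x = F.

Lemma Thm_mono (T T' : theory) F : (forall x, T x -> T' x) -> Thm T F -> Thm T' F.
Proof. intros H [L [HL HD]]. exists L; split; auto. Qed.

Lemma Thm_ax (T : theory) F : T F -> Thm T F.
Proof.
  intros H. exists [F]. split.
  - intros x [<-|[]]; auto.
  - apply nd_ax; left; auto.
Qed.

Lemma Thm_1 (T : theory) F H : Thm T F ->
  (forall L, ND false L F -> ND false L H) -> Thm T H.
Proof. intros [L [HL HD]] K. exists L; split; auto. Qed.

Lemma Thm_2 (T : theory) F1 F2 H : Thm T F1 -> Thm T F2 ->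
  (forall L, ND false L F1 -> ND false L F2 -> ND false L H) -> Thm T H.
Proof.
  intros [L1 [HL1 HD1]] [L2 [HL2 HD2]] K. exists (L1 ++ L2). split.
  - intros x Hx; apply in_app_iff in Hx; destruct Hx; auto.
  - apply K; eapply ND_weaken; eauto; intros x Hx; apply in_app_iff; auto.
Qed.

Lemma Thm_3 (T : theory) F1 F2 F3 H : Thm T F1 -> Thm T F2 -> Thm T F3 ->
  (forall L, ND false L F1 -> ND false L F2 -> ND false L F3 -> ND false L H) -> Thm T H.
Proof.
  intros [L1 [HL1 HD1]] [L2 [HL2 HD2]] [L3 [HL3 HD3]] K. exists (L1 ++ L2 ++ L3). split.
  - intros x Hx; repeat rewrite in_app_iff in Hx; destruct Hx as [|[|]]; auto.
  - apply K; eapply ND_weaken; eauto; intros x Hx; repeat rewrite in_app_iff; auto.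
Qed.

Lemma split_list (T : theory) F L : (forall x, In x L -> T x \/ x = F) ->
  exists L', (forall x, In x L' -> T x) /\ incl L (F :: L').
Proof.
  induction L as [|a L IH]; intros H.
  - exists []; split; [intros x []| intros x []].
  - destruct IH as [L' [H1 H2]]. { intros x Hx; apply H; right; auto. }
    destruct (H a (or_introl eq_refl)) as [Ha|Ha].
    + exists (a :: L'). split.
      * intros x [<-|Hx]; auto.
      * intros x [<-|Hx]. right; left; auto. apply H2 in Hx. destruct Hx as [<-|Hx]; [left; auto| right; right; auto].
    + subst a. exists L'. split; auto. intros x [<-|Hx]; [left; auto| auto].
Qed.

Lemma Thm_ded (T : theory) F G : Thm (ext T F) G -> Thm T (Imp F G).
Proof.
  intros [L [HL HD]]. destruct (split_list T F L HL) as [L' [H1 H2]].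
  exists L'. split; auto. apply nd_impI. eapply ND_weaken; eauto.
Qed.

Fixpoint dec (k n : nat) : form :=
  match k with
  | 0 => Bot
  | S k =>
    match fst (of_nat n) with
    | 0 => Var (snd (of_nat n))
    | 1 => Bot
    | 2 => And (dec k (fst (of_nat (snd (of_nat n))))) (dec k (snd (of_nat (snd (of_nat n)))))
    | 3 => Or (dec k (fst (of_nat (snd (of_nat n))))) (dec k (snd (of_nat (snd (of_nat n)))))
    | _ => Imp (dec k (fst (of_nat (snd (of_nat n))))) (dec k (snd (of_nat (snd (of_nat n)))))
    end
  end.

Lemma dec_S k n : dec (S k) n =
    match fst (of_nat n) with
    | 0 => Var (snd (of_nat n))
    | 1 => Bot
    | 2 => And (dec k (fst (of_nat (snd (of_nat n))))) (dec k (snd (of_nat (snd (of_nat n)))))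
    | 3 => Or (dec k (fst (of_nat (snd (of_nat n))))) (dec k (snd (of_nat (snd (of_nat n)))))
    | _ => Imp (dec k (fst (of_nat (snd (of_nat n))))) (dec k (snd (of_nat (snd (of_nat n)))))
    end.
Proof. reflexivity. Qed.

Lemma dec_surj F : exists m k, forall k', k <= k' -> dec k' m = F.
Proof.
  induction F as [p| |B [mB [kB IB]] C [mC [kC IC]]|B [mB [kB IB]] C [mC [kC IC]]|B [mB [kB IB]] C [mC [kC IC]]].
  - exists (to_nat (0, p)), 1. intros k' Hk. destruct k' as [|k']; [lia|].
    rewrite dec_S, cancel_of_to. reflexivity.
  - exists (to_nat (1, 0)), 0. intros k' _. destruct k' as [|k']; [reflexivity|].
    rewrite dec_S, cancel_of_to. reflexivity.
  - exists (to_nat (2, to_nat (mB, mC))), (S (max kB kC)). intros k' Hk.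
    destruct k' as [|k']; [lia|]. rewrite dec_S, !cancel_of_to. cbn [fst snd].
    rewrite ?cancel_of_to. cbn [fst snd]. rewrite (IB k'), (IC k') by lia. reflexivity.
  - exists (to_nat (3, to_nat (mB, mC))), (S (max kB kC)). intros k' Hk.
    destruct k' as [|k']; [lia|]. rewrite dec_S, !cancel_of_to. cbn [fst snd].
    rewrite ?cancel_of_to. cbn [fst snd]. rewrite (IB k'), (IC k') by lia. reflexivity.
  - exists (to_nat (4, to_nat (mB, mC))), (S (max kB kC)). intros k' Hk.
    destruct k' as [|k']; [lia|]. rewrite dec_S, !cancel_of_to. cbn [fst snd].
    rewrite ?cancel_of_to. cbn [fst snd]. rewrite (IB k'), (IC k') by lia. reflexivity.
Qed.

Definition enum (n : nat) : form := dec (fst (of_nat n)) (snd (of_nat n)).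

Lemma enum_surj F : exists n, enum n = F.
Proof.
  destruct (dec_surj F) as [m [k H]]. exists (to_nat (k, m)).
  unfold enum. rewrite cancel_of_to. apply H. auto.
Qed.

Fixpoint chain (T : theory) (A : form) (n : nat) : theory :=
  match n with
  | 0 => T
  | S n => fun x => chain T A n x \/ (x = enum n /\ ~ Thm (ext (chain T A n) (enum n)) A)
  end.
Definition lim T A : theory := fun x => exists n, chain T A n x.

Lemma chain_mono T A n m x : n <= m -> chain T A n x -> chain T A m x.
Proof. induction 1; auto. intros Hc; simpl; left; auto. Qed.

Lemma chain_cons T A : ~ Thm T A -> forall n, ~ Thm (chain T A n) A.
Proof.
  intros H0 n; induction n as [|n IH]; auto.
  intros HT. destruct (classic (Thm (ext (chain T A n) (enum n)) A)) as [Hc|Hc].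
  - apply IH. eapply Thm_mono; [|exact HT]. simpl. intros x [Hx|[_ Hx]]; tauto.
  - apply Hc. eapply Thm_mono; [|exact HT]. simpl. intros x [Hx|[Hx _]]; unfold ext; tauto.
Qed.

Lemma lim_fin T A L : (forall x, In x L -> lim T A x) ->
  exists N, forall x, In x L -> chain T A N x.
Proof.
  induction L as [|a L IH]; intros H.
  - exists 0; intros x [].
  - destruct IH as [N HN]. { intros; apply H; right; auto. }
    destruct (H a (or_introl eq_refl)) as [n Hn].
    exists (max N n). intros x [<-|Hx].
    + eapply chain_mono; [|exact Hn]; lia.
    + eapply chain_mono; [|apply HN; exact Hx]; lia.
Qed.

Lemma lim_cons T A : ~ Thm T A -> ~ Thm (lim T A) A.
Proof.
  intros H0 [L [HL HD]]. destruct (lim_fin T A L HL) as [N HN].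
  apply (chain_cons T A H0 N). exists L; auto.
Qed.

Lemma lim_not T A n : ~ lim T A (enum n) -> Thm (ext (chain T A n) (enum n)) A.
Proof.
  intros H. apply NNPP; intro Hc. apply H. exists (S n). simpl. right; auto.
Qed.

Definition closed (T : theory) := forall F, Thm T F -> T F.
Definition prime (T : theory) := forall F G, T (Or F G) -> T F \/ T G.

Lemma ext_mono (T T' : theory) F : (forall x, T x -> T' x) -> forall x, ext T F x -> ext T' F x.
Proof. unfold ext; intros H x [Hx|Hx]; auto. Qed.

Lemma chain_lim T A n x : chain T A n x -> lim T A x.
Proof. intros; exists n; auto. Qed.

Lemma extend T A : ~ Thm T A -> exists U, (forall x, T x -> U x) /\ closed U /\ prime U /\ ~ Thm U A.
Proof.
  intros H0. exists (lim T A). split; [|split; [|split]].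
  - intros x Hx; exists 0; auto.
  - intros F HF. apply NNPP; intro Hn.
    destruct (enum_surj F) as [n <-].
    apply (lim_cons T A H0).
    apply lim_not in Hn. apply Thm_ded in Hn.
    eapply Thm_mono in Hn; [|apply chain_lim].
    eapply Thm_2; [exact Hn | exact HF |]. intros L H1 H2; eapply nd_impE; eauto.
  - intros F G HO. apply NNPP; intro Hn.
    apply not_or_and in Hn. destruct Hn as [HnF HnG].
    destruct (enum_surj F) as [n <-]. destruct (enum_surj G) as [m <-].
    apply lim_not, Thm_ded in HnF. apply lim_not, Thm_ded in HnG.
    eapply Thm_mono in HnF; [|apply chain_lim].
    eapply Thm_mono in HnG; [|apply chain_lim].
    apply (lim_cons T A H0).
    eapply Thm_3; [exact (Thm_ax _ _ HO) | exact HnF | exact HnG |].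
    intros L H1 H2 H3. eapply nd_orE; [exact H1| |].
    + eapply nd_impE; [eapply ND_weaken; [exact H2| apply incl_tl, incl_refl] | apply nd_ax; left; auto].
    + eapply nd_impE; [eapply ND_weaken; [exact H3| apply incl_tl, incl_refl] | apply nd_ax; left; auto].
  - apply lim_cons; auto.
Qed.

Fixpoint eval (v : nat -> Prop) (F : form) : Prop :=
  match F with
  | Var p => v p
  | Bot => False
  | And B C => eval v B /\ eval v C
  | Or B C => eval v B \/ eval v C
  | Imp B C => eval v B -> eval v C
  end.

Lemma sound cl G A : ND cl G A -> forall v, (forall x, In x G -> eval v x) -> eval v A.
Proof.
  induction 1; intros v Hv; simpl in *.
  - auto.
  - split; eauto.
  - apply (IHND v Hv).
  - apply (IHND v Hv).
  - left; eauto.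
  - right; eauto.
  - destruct (IHND1 v Hv) as [Ha|Hb].
    + apply IHND2. intros x [<-|Hx]; auto.
    + apply IHND3. intros x [<-|Hx]; auto.
  - intros Ha. apply IHND. intros x [<-|Hx]; auto.
  - apply (IHND1 v Hv (IHND2 v Hv)).
  - destruct (IHND v Hv).
  - apply NNPP; intro Hn. apply (IHND v). intros x [<-|Hx]; simpl; auto.
Qed.

Definition val (S2 : nat -> Prop) (W : theory) : nat -> Prop := fun p => S2 p \/ W (Var p).
Definition posc (S2 : nat -> Prop) F :=
  (forall q, In q (Vneg F) -> S2 q) /\ (forall q, In q (Vpos F) -> ~ S2 q).
Definition negc (S2 : nat -> Prop) F :=
  (forall q, In q (Vpos F) -> S2 q) /\ (forall q, In q (Vneg F) -> ~ S2 q).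
Definition hypc (S2 : nat -> Prop) F :=
  (forall q, In q (Vns F) -> S2 q) /\ (forall q, In q (Vneg F) -> ~ S2 q).

Lemma key S2 W (Wc : closed W) (Wp : prime W) (Wb : ~ W Bot) F :
  (posc S2 F -> eval (val S2 W) F -> W F) /\
  (negc S2 F -> forall U, (forall x, W x -> U x) -> closed U -> prime U -> ~ U Bot ->
     U F -> eval (val S2 W) F).
Proof.
  induction F as [p| |B [IBp IBn] C [ICp ICn]|B [IBp IBn] C [ICp ICn]|B [IBp IBn] C [ICp ICn]];
    unfold posc, negc in *; simpl; split.
  - intros [_ H] [Hs|Hw]; auto. exfalso; apply (H p); auto.
  - intros [H _] U _ _ _ _ _. left; apply H; auto.
  - intros _ [].
  - intros _ U _ _ _ Ub HU; auto.
  - intros [H1 H2] [HB HC].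
    assert (WB : W B) by (apply IBp; auto; split; intros; [apply H1|apply H2]; apply in_app_iff; auto).
    assert (WC : W C) by (apply ICp; auto; split; intros; [apply H1|apply H2]; apply in_app_iff; auto).
    apply Wc. eapply Thm_2; [apply (Thm_ax _ _ WB)|apply (Thm_ax _ _ WC)|]. intros; apply nd_andI; auto.
  - intros [H1 H2] U HWU Uc Up Ub HU. split.
    + apply (IBn) with U; auto. split; intros; [apply H1|apply H2]; apply in_app_iff; auto.
      apply Uc. eapply Thm_1; [apply (Thm_ax _ _ HU)|]. intros; eapply nd_andE1; eauto.
    + apply (ICn) with U; auto. split; intros; [apply H1|apply H2]; apply in_app_iff; auto.
      apply Uc. eapply Thm_1; [apply (Thm_ax _ _ HU)|]. intros; eapply nd_andE2; eauto.
  - intros [H1 H2] [HB|HC].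
    + assert (WB : W B) by (apply IBp; auto; split; intros; [apply H1|apply H2]; apply in_app_iff; auto).
      apply Wc. eapply Thm_1; [apply (Thm_ax _ _ WB)|]. intros; apply nd_orI1; auto.
    + assert (WC : W C) by (apply ICp; auto; split; intros; [apply H1|apply H2]; apply in_app_iff; auto).
      apply Wc. eapply Thm_1; [apply (Thm_ax _ _ WC)|]. intros; apply nd_orI2; auto.
  - intros [H1 H2] U HWU Uc Up Ub HU. destruct (Up _ _ HU) as [HB|HC].
    + left. apply (IBn) with U; auto. split; intros; [apply H1|apply H2]; apply in_app_iff; auto.
    + right. apply (ICn) with U; auto. split; intros; [apply H1|apply H2]; apply in_app_iff; auto.
  - intros [H1 H2] Himp.
    assert (nB : negc S2 B) by (split; intros; [apply H1|apply H2]; apply in_app_iff; auto).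
    assert (pC : posc S2 C) by (split; intros; [apply H1|apply H2]; apply in_app_iff; auto).
    destruct (classic (eval (val S2 W) C)) as [EC|EC].
    + assert (WC : W C) by (apply ICp; auto).
      apply Wc. eapply Thm_1; [apply (Thm_ax _ _ WC)|]. intros; apply nd_impI.
      eapply ND_weaken; eauto. apply incl_tl, incl_refl.
    + apply NNPP; intro HnW.
      assert (HnT : ~ Thm (ext W B) C) by (intro HT; apply HnW, Wc, Thm_ded; auto).
      destruct (extend _ _ HnT) as [U [HU [Uc [Up UC]]]].
      apply EC, Himp. apply (IBn nB U).
      * intros x Hx; apply HU; left; auto.
      * auto.
      * auto.
      * intro Ubot. apply UC. eapply Thm_1; [apply (Thm_ax _ _ Ubot)|]. intros; apply nd_efq; auto.
      * apply HU; right; auto.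
  - intros [H1 H2] U HWU Uc Up Ub HU EB.
    assert (pB : posc S2 B) by (split; intros; [apply H1|apply H2]; apply in_app_iff; auto).
    assert (nC : negc S2 C) by (split; intros; [apply H1|apply H2]; apply in_app_iff; auto).
    assert (WB : W B) by (apply IBp; auto).
    apply (ICn nC U); auto. apply Uc.
    eapply Thm_2; [apply (Thm_ax _ _ HU)|apply (Thm_ax _ _ (HWU _ WB))|].
    intros; eapply nd_impE; eauto.
Qed.

Lemma hypl S2 W (Wc : closed W) (Wp : prime W) (Wb : ~ W Bot) H :
  W H -> hypc S2 H -> eval (val S2 W) H.
Proof.
  induction H as [p| |B IB C IC|B IB C IC|B IB C IC]; unfold hypc; simpl; intros HW [H1 H2].
  - right; auto.
  - auto.
  - split.
    + apply IB. apply Wc. eapply Thm_1; [apply (Thm_ax _ _ HW)|]. intros; eapply nd_andE1; eauto.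
      split; intros; [apply H1|apply H2]; apply in_app_iff; auto.
    + apply IC. apply Wc. eapply Thm_1; [apply (Thm_ax _ _ HW)|]. intros; eapply nd_andE2; eauto.
      split; intros; [apply H1|apply H2]; apply in_app_iff; auto.
  - destruct (Wp _ _ HW) as [HB|HC].
    + left. apply IB; auto. split; intros; [apply H1|apply H2]; apply in_app_iff; auto.
    + right. apply IC; auto. split; intros; [apply H1|apply H2]; apply in_app_iff; auto.
  - intros EB.
    assert (pB : posc S2 B) by (split; intros; [apply H1|apply H2]; apply in_app_iff; auto).
    assert (WB : W B) by (apply (proj1 (key S2 W Wc Wp Wb B)); auto).
    apply IC.
    + apply Wc. eapply Thm_2; [apply (Thm_ax _ _ HW)|apply (Thm_ax _ _ WB)|].
      intros; eapply nd_impE; eauto.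
    + split; intros; [apply H1|apply H2]; apply in_app_iff; auto.
Qed.

Theorem mainTheorem2 (G : list form) (A : form) :
  prov_c G A ->
  (forall p : nat,
      (In p (VnegL G) \/ In p (Vpos A)) ->
      (In p (VnsL G) \/ In p (Vneg A)) -> False) ->
  prov_i G A.
Proof.
  intros Hc Hdisj. apply NNPP; intro Hn.
  assert (H0 : ~ Thm (fun x => In x G) A).
  { intros [L [HL HD]]. apply Hn. eapply ND_weaken; eauto. }
  destruct (extend _ _ H0) as [W [HTW [Wc [Wp HWA]]]].
  assert (Wb : ~ W Bot).
  { intro Hb; apply HWA. eapply Thm_1; [apply (Thm_ax _ _ Hb)|]. intros; apply nd_efq; auto. }
  set (S2 := fun q => In q (VnsL G) \/ In q (Vneg A)).
  assert (Hev : eval (val S2 W) A).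
  { apply (sound _ _ _ Hc). intros x Hx. apply (hypl S2 W Wc Wp Wb x).
    - apply HTW; auto.
    - split.
      + intros q Hq. left. unfold VnsL. apply in_flat_map. eauto.
      + intros q Hq HS. apply (Hdisj q); [|exact HS]. left. apply in_flat_map; eauto. }
  apply HWA. apply Thm_ax. apply (proj1 (key S2 W Wc Wp Wb A)); [|exact Hev].
  split.
  - intros q Hq; right; auto.
  - intros q Hq HS; apply (Hdisj q); [right; auto| exact HS].
Qed.
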